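(* Let $B$ be a unital $C^*$-algebra with a $*$-isomorphism $\psi:B\to M_n\otimes B$ satisfying $\psi(1)=I_n\otimes1$. Then for all $m\ge1$, $1\le i,j\le n$ and $b,c\in B$: $\chi_{mij}(\sigma_m(b)\,c)=b\,\chi_{mij}(c)$ and $\chi_{mij}(c\,\sigma_m(b))=\chi_{mij}(c)\,b$.
   Context: $M_n=M_n(\mathbb{C})$, matrix units $E_{kl}$, identity $I_n$. Define $\psi_0=\mathrm{id}_B$, $\psi_{m+1}=(\mathrm{id}^{\otimes m}\otimes\psi)\circ\psi_m:B\to M_n^{\otimes(m+1)}\otimes B$. With $f(b)=I_n\otimes b$, for $m\ge1$ let $\sigma_m=\psi_m^{-1}\circ(\mathrm{id}^{\otimes(m-1)}\otimes f)\circ\psi_{m-1}:B\to B$. Let $e_{ij}:M_n\to\mathbb{C}$ be the linear functional $e_{ij}(E_{kl})=\delta_{ik}\delta_{jl}$, and for $m\ge1$ let $\chi_{mij}=\psi_{m-1}^{-1}\circ(\mathrm{id}^{\otimes(m-1)}\otimes e_{ij}\otimes\mathrm{id}_B)\circ\psi_m:B\to B$, where $\mathrm{id}^{\otimes(m-1)}\otimes e_{ij}\otimes\mathrm{id}_B:M_n^{\otimes m}\otimes B\to M_n^{\otimes(m-1)}\otimes B$ is the slice map on the $m$-th tensor factor. *)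

(* Defs.v *)
From HB Require Import structures.
From mathcomp Require Import all_boot all_order all_algebra.
From mathcomp Require Import complex.
From mathcomp Require Import reals.
From Stdlib Require Import ClassicalEpsilon.

Set Implicit Arguments.
Unset Strict Implicit.
Unset Printing Implicit Defensive.

Import Order.TTheory GRing.Theory Num.Theory.
Local Open Scope ring_scope.

Definition is_unital_cstar_algebra (R : realType) (B : algType R[i])
    (star : B -> B) (nrm : B -> R) : Prop :=
  [/\
      [/\ (forall x y : B, star (x + y) = star x + star y),
      (forall (a : R[i]) (x : B), star (a *: x) = a^* *: star x),
      (forall x y : B, star (x * y) = star y * star x) &
      (forall x : B, star (star x) = x)],
      [/\ (forall x : B, nrm x = 0 <-> x = 0),
          (forall x y : B, nrm (x + y) <= nrm x + nrm y),
          (forall (a : R[i]) (x : B), nrm (a *: x) = Normc.normc a * nrm x),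
          (forall x y : B, nrm (x * y) <= nrm x * nrm y) &
          (forall x : B, nrm (star x * x) = nrm x ^+ 2)] &
      (forall u : nat -> B,
         (forall e : R, 0 < e -> exists N : nat,
            forall p q : nat, (N <= p)%N -> (N <= q)%N -> nrm (u p - u q) < e) ->
         exists l : B, forall e : R, 0 < e -> exists N : nat,
            forall p : nat, (N <= p)%N -> nrm (u p - l) < e)].

(* M_n (x) B is identified with 'M[B]_n: the element sum E_kl (x) b_kl *)
(* is the matrix with (k,l) entry b_kl.  Its algebra operations are     *)
Definition is_star_isomorphism (R : realType) (B : algType R[i])
    (star : B -> B) (n : nat) (psi : B -> 'M[B]_n) : Prop :=
  [/\ (forall x y : B, psi (x + y) = psi x + psi y),
      (forall (a : R[i]) (x : B), psi (a *: x) = map_mx (fun e => a *: e) (psi x)),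
      (forall x y : B, psi (x * y) = psi x *m psi y),
      (forall x : B, psi (star x) = (map_mx star (psi x))^T) &
      bijective psi].

(* M_n^{(x) m} (x) B : coefficient families indexed by                  *)
(* idx n m = (...((tt, p_1), p_2) ..., p_m) with p_r = (k_r,l_r), and   *)
(* X : idx n m -> B  stands for                                         *)
(*   sum X(p_1,...,p_m) E_{p_1} (x) ... (x) E_{p_m} (x) X(...)          *)
(* (p_m is the m-th, i.e. last, M_n factor, adjacent to B).             *)
Fixpoint idx (n m : nat) : Type :=
  match m with
  | 0 => unit
  | m'.+1 => (idx n m' * ('I_n * 'I_n))%type
  end.

Definition tens (B : Type) (n m : nat) : Type := idx n m -> B.

(* psi_0 = id, psi_{m+1} = (id^{(x)m} (x) psi) o psi_m *)
Fixpoint psi_pow (B : Type) (n : nat) (psi : B -> 'M[B]_n) (m : nat)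
  : B -> tens B n m :=
  match m return B -> tens B n m with
  | 0 => fun b _ => b
  | m'.+1 => fun b t => psi (@psi_pow B n psi m' b t.1) t.2.1 t.2.2
  end.
Arguments psi_pow {B n} psi m _ _.

Definition inv_map (A T : Type) (a0 : A) (g : A -> T) (y : T) : A :=
  epsilon (inhabits a0) (fun x => g x = y).

(* id^{(x)m} (x) f, with f(b) = I_n (x) b *)
Definition amp_f (B : nzRingType) (n m : nat) (X : tens B n m) : tens B n m.+1 :=
  fun t => if t.2.1 == t.2.2 then X t.1 else 0.

(* id^{(x)m} (x) e_ij (x) id_B : slice on the (m+1)-th M_n factor *)
Definition slice (B : Type) (n m : nat) (i j : 'I_n) (X : tens B n m.+1)
  : tens B n m := fun t => X (t, (i, j)).

(* sigma_{m+1} = psi_{m+1}^{-1} o (id^{(x)m} (x) f) o psi_m *)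
Definition sigma (B : nzRingType) (n : nat) (psi : B -> 'M[B]_n) (m : nat)
  : B -> B :=
  fun b => inv_map 0 (psi_pow psi m.+1) (amp_f (psi_pow psi m b)).

(* chi_{(m+1) i j} = psi_m^{-1} o (id^{(x)m} (x) e_ij (x) id) o psi_{m+1} *)
Definition chi (B : nzRingType) (n : nat) (psi : B -> 'M[B]_n) (m : nat)
  (i j : 'I_n) : B -> B :=
  fun c => inv_map 0 (psi_pow psi m) (slice i j (psi_pow psi m.+1 c)).

(* Main.v *)
Require Import Defs.
From HB Require Import structures.
From mathcomp Require Import all_boot all_order all_algebra.
From mathcomp Require Import complex.
From mathcomp Require Import reals.
From Stdlib Require Import ClassicalEpsilon FunctionalExtensionality.

Set Implicit Arguments.
Unset Strict Implicit.
Unset Printing Implicit Defensive.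

Import Order.TTheory GRing.Theory Num.Theory.
Local Open Scope ring_scope.

Fixpoint tmul (S : pzRingType) (n m : nat) : tens S n m -> tens S n m -> tens S n m :=
  match m return tens S n m -> tens S n m -> tens S n m with
  | 0 => fun X Y t => X t * Y t
  | m'.+1 => fun X Y t => \sum_(r < n)
      @tmul S n m' (fun u => X (u, (t.2.1, r))) (fun u => Y (u, (r, t.2.2))) t.1
  end.

Lemma tmul0l (S : pzRingType) n m (Y : tens S n m) t :
  tmul (fun _ => 0) Y t = 0.
Proof.
elim: m Y t => [|m IH] Y t /=; first by rewrite mul0r.
by rewrite big1 // => r _; rewrite IH.
Qed.

Lemma tmul0r (S : pzRingType) n m (X : tens S n m) t :
  tmul X (fun _ => 0) t = 0.
Proof.
elim: m X t => [|m IH] X t /=; first by rewrite mulr0.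
by rewrite big1 // => r _; rewrite IH.
Qed.

Lemma tmul_ext (S : pzRingType) n m (X X' Y Y' : tens S n m) t :
  (forall u, X u = X' u) -> (forall u, Y u = Y' u) -> tmul X Y t = tmul X' Y' t.
Proof.
move=> hX hY.
have -> : X = X' by apply: functional_extensionality.
by have -> : Y = Y' by apply: functional_extensionality.
Qed.

Lemma tmul_uncurry (B : pzRingType) n m (X Y : tens 'M[B]_n n m) t k l :
  tmul X Y t k l = \sum_(r < n) tmul (fun u => X u k r) (fun u => Y u r l) t.
Proof.
elim: m X Y t => [|m IH] X Y t /=; first by rewrite -mulmxE mxE.
rewrite summxE.
idtac.
rewrite exchange_big; apply: eq_bigr => q _; exact: IH.
Qed.

Lemma tmul_nat (B : pzRingType) n (psi : B -> 'M[B]_n)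
  (hD : forall x y, psi (x + y) = psi x + psi y)
  (hM : forall x y, psi (x * y) = psi x *m psi y) m (X Y : tens B n m) t :
  psi (tmul X Y t) = tmul (fun u => psi (X u)) (fun u => psi (Y u)) t.
Proof.
have h0 : psi 0 = 0.
  by have h := hD 0 0; rewrite addr0 in h; apply: (addrI (psi 0)); rewrite addr0 -h.
elim: m X Y t => [|m IH] X Y t /=; first by rewrite hM mulmxE.
rewrite (big_morph psi hD h0).
by apply: eq_bigr => r _; rewrite IH.
Qed.

Lemma psi_pow_mul (B : pzRingType) n (psi : B -> 'M[B]_n)
  (hD : forall x y, psi (x + y) = psi x + psi y)
  (hM : forall x y, psi (x * y) = psi x *m psi y) m x y t :
  psi_pow psi m (x * y) t = tmul (psi_pow psi m x) (psi_pow psi m y) t.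
Proof.
elim: m x y t => [|m IH] x y t //=.
case: t => t [k l] /=.
have -> : psi_pow psi m (x * y) = tmul (psi_pow psi m x) (psi_pow psi m y).
  by apply: functional_extensionality => u; rewrite IH.
by rewrite (tmul_nat hD hM) tmul_uncurry.
Qed.

Lemma psi_pow_surj (B : pzRingType) n (psi : B -> 'M[B]_n) (hb : bijective psi) m
  (X : tens B n m) : exists x, psi_pow psi m x = X.
Proof.
case: hb => g psiK gK.
elim: m X => [|m IH] X.
  by exists (X tt); apply: functional_extensionality => -[].
have [x hx] := IH (fun t => g (\matrix_(k, l) X (t, (k, l)))).
exists x; apply: functional_extensionality => -[t [k l]] /=.
by rewrite hx gK mxE.
Qed.

Lemma psi_pow_inj (B : pzRingType) n (psi : B -> 'M[B]_n) (hb : bijective psi) m x y :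
  psi_pow psi m x = psi_pow psi m y -> x = y.
Proof.
have hi := bij_inj hb.
elim: m x y => [|m IH] x y h.
  by have := congr1 (fun f => f tt) h.
apply: IH; apply: functional_extensionality => t; apply: hi.
apply/matrixP => k l.
by have := congr1 (fun f => f (t, (k, l))) h.
Qed.

Lemma inv_mapK (A T : Type) (a0 : A) (g : A -> T) y :
  (exists x, g x = y) -> g (inv_map a0 g y) = y.
Proof. move=> h; rewrite /inv_map; exact: (epsilon_spec (inhabits a0) (fun x => g x = y) h). Qed.

Theorem corollary3p2 (R : realType) (B : algType R[i]) (star : B -> B)
    (nrm : B -> R) (n : nat) (psi : B -> 'M[B]_n) :
  is_unital_cstar_algebra star nrm ->
  is_star_isomorphism star psi ->
  psi 1 = 1%:M ->
  forall (m : nat) (i j : 'I_n) (b c : B),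
    chi psi m i j (sigma psi m b * c) = b * chi psi m i j c /\
    chi psi m i j (c * sigma psi m b) = chi psi m i j c * b.
Proof.
move=> _ [hD _ hM _ hb] _ m i j b c.
have PM := psi_pow_mul hD hM.
have hchi : forall x, psi_pow psi m (chi psi m i j x) = slice i j (psi_pow psi m.+1 x).
  by move=> x; rewrite /chi inv_mapK //; apply: psi_pow_surj.
have hsig : psi_pow psi m.+1 (sigma psi m b) = amp_f (psi_pow psi m b).
  by rewrite /sigma inv_mapK //; apply: psi_pow_surj.
have hs : forall u k l, psi (psi_pow psi m (sigma psi m b) u) k l =
    (if k == l then psi_pow psi m b u else 0).
  by move=> u k l; have := congr1 (fun f => f (u, (k, l))) hsig.
split; apply: (psi_pow_inj hb (m := m)); rewrite hchi;
  apply: functional_extensionality => t; rewrite /slice !PM hchi /=.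
- rewrite (bigD1 i) //= big1 ?addr0.
    by apply: tmul_ext => u //=; rewrite hs eqxx.
  move=> r /negbTE hr.
  rewrite -(tmul0l (fun u => psi (psi_pow psi m c u) r j) t).
  by apply: tmul_ext => u //=; rewrite hs eq_sym hr.
- rewrite (bigD1 j) //= big1 ?addr0.
    by apply: tmul_ext => u //=; rewrite hs eqxx.
  move=> r /negbTE hr.
  rewrite -(tmul0r (fun u => psi (psi_pow psi m c u) i r) t).
  by apply: tmul_ext => u //=; rewrite hs hr.
Qed.
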